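(* Let $\Omega\subset\mathbb{R}^n$ be an open set, $K\subset\Omega$ a non-empty compact set, and $\lambda>0$. Let $\chi_K:\mathbb{R}^n\to\{0,1\}$ be the characteristic function of $K$ and $\chi_K^\Omega$ its restriction to $\overline\Omega$. If $\mathrm{dist}^2(K,\partial\Omega)>1/\lambda$, then for every $x\in\overline\Omega$, $$M^{\lambda}_{\Omega}(\chi_K^\Omega)(x)=M^\lambda(\chi_K)(x),\qquad M_{\lambda,\Omega}(M^{\lambda}_{\Omega}(\chi_K^\Omega))(x)=M_\lambda(M^\lambda(\chi_K))(x),$$ and consequently, setting $C^u_{\lambda,\Omega}(\chi_K^\Omega)(x)=M_{\lambda,\Omega}(M^{\lambda}_{\Omega}(\chi_K^\Omega))(x)$, we have $C^u_{\lambda,\Omega}(\chi_K^\Omega)(x)=C^u_\lambda(\chi_K)(x)$.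
   Context: $\mathrm{dist}(K,\partial\Omega)=\inf\{|x-y|:x\in K,\,y\in\partial\Omega\}$. For bounded $g:\mathbb{R}^n\to\mathbb{R}$: $M_\lambda(g)(x)=\inf_{y\in\mathbb{R}^n}\{g(y)+\lambda|y-x|^2\}$, $M^\lambda(g)(x)=\sup_{y\in\mathbb{R}^n}\{g(y)-\lambda|y-x|^2\}$. For bounded $g:\overline\Omega\to\mathbb{R}$ and $x\in\overline\Omega$: $M_{\lambda,\Omega}(g)(x)=\inf_{y\in\overline\Omega}\{g(y)+\lambda|y-x|^2\}$, $M^{\lambda}_{\Omega}(g)(x)=\sup_{y\in\overline\Omega}\{g(y)-\lambda|y-x|^2\}$. The upper compensated convex transform is $C^u_\lambda(g)(x)=\lambda|x|^2-\mathrm{co}[\lambda|\cdot|^2-g](x)$, with $\mathrm{co}$ the convex envelope. *)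

(* Defs.v *)
From HB Require Import structures.
From mathcomp Require Import all_boot all_order all_algebra.
From mathcomp Require Import all_classical all_reals all_analysis.
Set Implicit Arguments. Unset Strict Implicit. Unset Printing Implicit Defensive.
Import Order.TTheory GRing.Theory Num.Theory.
Import numFieldNormedType.Exports.
Local Open Scope classical_set_scope.
Local Open Scope ring_scope.

Section Defs.
Variables (R : realType) (n : nat).
Notation V := 'rV[R]_n.

Definition sqnorm (x : V) : R := \sum_(i < n) (x ord0 i) ^+ 2.
Definition enorm (x : V) : R := Num.sqrt (sqnorm x).

Definition boundary (A : set V) : set V := closure A `\` interior A.

(* dist(K, B) = inf {|x - y| : x in K, y in B}, in extended reals (inf of empty = +oo) *)
Definition dist_sets (K B : set V) : \bar R :=
  ereal_inf [set ((enorm (x - y))%:E) | x in K & y in B].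

(* M_{lambda,D}(g)(x) = inf_{y in D} { g y + lambda |y - x|^2 } ;
   M_lambda = M_{lambda, R^n} (D = setT) *)
Definition Mlow (D : set V) (lam : R) (g : V -> R) (x : V) : R :=
  inf [set g y + lam * sqnorm (y - x) | y in D].

Definition Mup (D : set V) (lam : R) (g : V -> R) (x : V) : R :=
  sup [set g y - lam * sqnorm (y - x) | y in D].

Definition convex_fun (h : V -> R) : Prop :=
  forall (x y : V) (t : R), 0 <= t -> t <= 1 ->
    h (t *: x + (1 - t) *: y) <= t * h x + (1 - t) * h y.

Definition conv_env (f : V -> R) (x : V) : R :=
  sup [set h x | h in [set h : V -> R | convex_fun h /\ (forall y, h y <= f y)]].

Definition Cu (lam : R) (g : V -> R) (x : V) : R :=
  lam * sqnorm x - conv_env (fun y => lam * sqnorm y - g y) x.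

End Defs.

(* Main.v *)
Require Import Defs.
From HB Require Import structures.
From mathcomp Require Import all_boot all_order all_algebra.
From mathcomp Require Import all_classical all_reals all_analysis.
From mathcomp Require Import ring lra.
Import Order.TTheory GRing.Theory Num.Theory.
Import numFieldNormedType.Exports.
Local Open Scope classical_set_scope.
Local Open Scope ring_scope.
Set Implicit Arguments. Unset Strict Implicit.


Lemma div_ineq (R : realFieldType) (A B s s' : R) : s < 0 -> 0 < s' -> A * s' <= B * (-s) -> A/(-s) <= B/s'.
Proof.
move=> s0 s'0 H.
rewrite ler_pdivrMr; last lra.
by rewrite mulrAC ler_pdivlMr.
Qed.
Lemma mul_le_div (R : realFieldType) (A B s : R) : 0 < s -> A <= B / s -> A * s <= B.
Proof. by move=> s0; rewrite ler_pdivlMr. Qed.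
Lemma div_le_mul (R : realFieldType) (A B s : R) : 0 < s -> A / s <= B -> A <= B * s.
Proof. by move=> s0; rewrite ler_pdivrMr. Qed.
Lemma comb_ineq (R : realFieldType) (A B s s' : R) : s < 0 -> 0 < s' ->
  A * (s' / (s' - s)) <= B * (- s / (s' - s)) -> A * s' <= B * - s.
Proof.
move=> s0 s'0 H.
have d0 : 0 < s' - s by lra.
have E1 : A * s' = (A * (s' / (s' - s))) * (s' - s) by field; lra.
have E2 : B * - s = (B * (- s / (s' - s))) * (s' - s) by field; lra.
by rewrite E1 E2 ler_wpM2r // ltW.
Qed.

Section Aux.
Variables (R : realType) (n : nat).
Notation V := 'rV[R]_n.
Implicit Types (u v w : V).

Definition dot u v : R := \sum_(i < n) u ord0 i * v ord0 i.

Lemma sqnormE v : sqnorm v = dot v v.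
Proof. by apply: eq_bigr => i _; rewrite expr2. Qed.

Lemma dotC u v : dot u v = dot v u.
Proof. by apply: eq_bigr => i _; rewrite mulrC. Qed.

Lemma dotDl u v w : dot (u + v) w = dot u w + dot v w.
Proof. by rewrite /dot -big_split; apply: eq_bigr => i _; rewrite mxE mulrDl. Qed.

Lemma dotZl (a : R) u v : dot (a *: u) v = a * dot u v.
Proof. by rewrite /dot mulr_sumr; apply: eq_bigr => i _; rewrite mxE mulrA. Qed.

Lemma dotNl u v : dot (- u) v = - dot u v.
Proof. by rewrite -scaleN1r dotZl mulN1r. Qed.

Lemma dotBl u v w : dot (u - v) w = dot u w - dot v w.
Proof. by rewrite dotDl dotNl. Qed.

Lemma dotDr u v w : dot w (u + v) = dot w u + dot w v.
Proof. by rewrite dotC dotDl !(dotC w). Qed.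

Lemma dotZr (a : R) u v : dot v (a *: u) = a * dot v u.
Proof. by rewrite dotC dotZl dotC. Qed.

Lemma dotBr u v w : dot w (u - v) = dot w u - dot w v.
Proof. by rewrite dotC dotBl !(dotC w). Qed.

Lemma dot0l v : dot 0 v = 0.
Proof. by rewrite /dot big1 // => i _; rewrite mxE mul0r. Qed.

Lemma sqnorm_ge0 v : 0 <= sqnorm v.
Proof. by apply: sumr_ge0 => i _; exact: sqr_ge0. Qed.

Lemma sqnormB u v : sqnorm (u - v) = sqnorm u - 2 * dot u v + sqnorm v.
Proof. rewrite !sqnormE dotBl !dotBr (dotC v u); ring. Qed.

Lemma sqnormBC u v : sqnorm (u - v) = sqnorm (v - u).
Proof. rewrite !sqnormB (dotC v u); ring. Qed.

Lemma sqnormZ (a : R) v : sqnorm (a *: v) = a ^+ 2 * sqnorm v.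
Proof. rewrite !sqnormE dotZl dotZr; ring. Qed.

End Aux.

Unset Implicit Arguments.


Section Sub.
Variables (R : realType) (n : nat).
Notation V := 'rV[R]_n.
Implicit Types (u v w : V).

Lemma extend_step (phi : V -> R) (x : V) (W : set V) (q e : V) :
  convex_fun phi -> W 0 ->
  (forall a b w1 w2, W w1 -> W w2 -> W (a *: w1 + b *: w2)) ->
  (forall w, W w -> dot q w <= phi (x + w) - phi x) ->
  exists c : R, forall w s, W w -> dot q w + s * c <= phi (x + w + s *: e) - phi x.
Proof.
move=> cvx W0 Wlin Hq.
pose L := [set l | exists w s, [/\ W w, s < 0 & l = (phi x + dot q w - phi (x + w + s *: e)) / (- s)]].
have key : forall w s w' s', W w -> s < 0 -> W w' -> 0 < s' ->
   (phi x + dot q w - phi (x + w + s *: e)) / (- s) <=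
   (phi (x + w' + s' *: e) - phi x - dot q w') / s'.
  move=> w s w' s' Ww s0 Ww' s'0.
  have d0 : 0 < s' - s by lra.
  pose a := s' / (s' - s); pose b := - s / (s' - s).
  have a0 : 0 <= a by rewrite /a divr_ge0 // ltW.
  have a1 : a <= 1 by rewrite /a ler_pdivrMr // mul1r; lra.
  have ba : 1 - a = b by rewrite /a /b; field; lra.
  have H1 := cvx (x + w + s *: e) (x + w' + s' *: e) a a0 a1.
  have Eq : a *: (x + w + s *: e) + (1 - a) *: (x + w' + s' *: e) = x + (a *: w + b *: w').
    rewrite ba /a /b; apply/rowP => i; rewrite !mxE; field; lra.
  rewrite Eq in H1.
  have H2 := Hq _ (Wlin a b w w' Ww Ww').
  rewrite dotDr !dotZr in H2.
  apply: div_ineq => //.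
  apply: comb_ineq => //; rewrite -/a -/b.
  rewrite -ba in H1 H2 *.
  lra.
exists (sup L) => w s Ww.
have L0 : L !=set0.
  by exists ((phi x + dot q 0 - phi (x + 0 + (-1) *: e)) / (- (-1))); exists 0, (-1); split => //; lra.
have Lub : ubound L ((phi (x + 0 + 1 *: e) - phi x - dot q 0) / 1).
  by move=> l [w1 [s1 [Ww1 s10 ->]]]; apply: key => //; lra.
have [s0|s0|s0] := ltgtP s 0.
- have : (phi x + dot q w - phi (x + w + s *: e)) / (- s) <= sup L.
    apply: ub_le_sup; first by exists ((phi (x + 0 + 1 *: e) - phi x - dot q 0) / 1).
    by exists w, s.
  move/div_le_mul => /(_ ltac:(lra)).
  lra.
- have : sup L <= (phi (x + w + s *: e) - phi x - dot q w) / s.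
    apply: ge_sup => // l [w1 [s1 [Ww1 s10 ->]]]; exact: key.
  move/mul_le_div => /(_ s0).
  lra.
- by rewrite s0 mul0r addr0 scale0r addr0; exact: Hq.
Qed.


Definition Wk (k : nat) : set V := [set v | forall j : 'I_n, (k <= j)%N -> v ord0 j = 0].

Lemma dot_delta (kk : 'I_n) v : dot (\row_j ((j == kk)%:R : R)) v = v ord0 kk.
Proof.
rewrite /dot (bigD1 kk) //= big1 ?addr0; first by rewrite mxE eqxx mul1r.
by move=> i /negbTE ik; rewrite mxE ik mul0r.
Qed.

Lemma subgrad (phi : V -> R) (x : V) : convex_fun phi ->
  exists q, forall v, dot q v <= phi (x + v) - phi x.
Proof.
move=> cvx.
suff H : forall k, (k <= n)%N -> exists q, forall v, Wk k v -> dot q v <= phi (x + v) - phi x.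
  have [q Hq] := H n (leqnn n); exists q => v; apply: Hq => j.
  by rewrite leqNgt ltn_ord.
elim=> [_|k IH Hk].
  exists 0 => v Wv.
  have -> : v = 0 by apply/rowP => j; rewrite mxE; apply: Wv.
  by rewrite dot0l addr0 subrr.
have [q Hq] := IH (ltnW Hk).
pose kk : 'I_n := Ordinal Hk.
pose e : V := \row_j ((j == kk)%:R : R).
have W0 : Wk k 0 by move=> j _; rewrite mxE.
have Wlin : forall a b w1 w2, Wk k w1 -> Wk k w2 -> Wk k (a *: w1 + b *: w2).
  by move=> a b w1 w2 H1 H2 j kj; rewrite !mxE H1 // H2 // !mulr0 addr0.
have [c Hc] := @extend_step phi x (Wk k) q e cvx W0 Wlin Hq.
exists (q + (c - dot q e) *: e) => v Wv.
pose s := v ord0 kk.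
pose w := v - s *: e.
have Ww : Wk k w.
  move=> j kj; rewrite !mxE.
  have [jk|jk] := eqVneq j kk.
    by rewrite jk mulr1 subrr.
  rewrite mulr0 subr0; apply: Wv.
  rewrite ltn_neqAle kj andbT; apply/negP => /eqP kj'.
  by apply/negP: jk; rewrite negbK; apply/eqP/val_inj.
have Ev : v = w + s *: e by rewrite /w subrK.
have := Hc w s Ww.
rewrite -addrA -Ev dotDl dotZl dot_delta -/s.
have -> : dot q v = dot q w + s * dot q e by rewrite {1}Ev dotDr dotZr.
lra.
Qed.

End Sub.

Set Implicit Arguments.



Section C.
Variables (R : realType) (n : nat).
Notation V := 'rV[R]_n.
Implicit Types (u v w y z : V).
Variable (K : set V).

Lemma indic_ge0 y : 0 <= \1_K y :> R.
Proof. by rewrite indicE. Qed.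
Lemma indic_le1 y : \1_K y <= 1 :> R.
Proof. by rewrite indicE; case: (y \in K). Qed.
Lemma indic1 y : K y -> \1_K y = 1 :> R.
Proof. by move=> Ky; rewrite indicE mem_set. Qed.
Lemma indic0 y : ~ K y -> \1_K y = 0 :> R.
Proof. by move=> Ky; rewrite indicE memNset. Qed.

Variable lam : R.
Hypothesis lam0 : 0 < lam.

Lemma Mup_ub (D : set V) y z : D z -> \1_K z - lam * sqnorm (z - y) <= Mup D lam \1_K y.
Proof.
move=> Dz; apply: ub_le_sup; last by exists z.
exists 1 => _ [z' _ <-].
have := lam0; have := sqnorm_ge0 (z' - y); have := indic_le1 z'; nra.
Qed.

Lemma Mup_le (D : set V) y (c : R) : D !=set0 ->
  (forall z, D z -> \1_K z - lam * sqnorm (z - y) <= c) -> Mup D lam \1_K y <= c.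
Proof.
move=> [z0 Dz0] H; apply: ge_sup; first by exists (\1_K z0 - lam * sqnorm (z0 - y)), z0.
by move=> _ [z Dz <-]; exact: H.
Qed.

Lemma Mup_ge0 (D : set V) y : D y -> 0 <= Mup D lam \1_K y.
Proof.
move=> Dy; apply: le_trans (Mup_ub y Dy).
by rewrite subrr /sqnorm big1 ?mulr0 ?subr0 ?indic_ge0 // => i _; rewrite mxE expr0n.
Qed.

Lemma Mup_le1 (D : set V) y : D !=set0 -> Mup D lam \1_K y <= 1.
Proof.
move=> D0; apply: Mup_le => // z _.
have := lam0; have := sqnorm_ge0 (z - y); have := indic_le1 z; nra.
Qed.

Lemma Mlow_lb (D : set V) (g : V -> R) x y : (forall z, 0 <= g z) -> D y ->
  Mlow D lam g x <= g y + lam * sqnorm (y - x).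
Proof.
move=> g0 Dy; apply: ge_inf; last by exists y.
exists 0 => _ [z _ <-].
have := lam0; have := sqnorm_ge0 (z - x); have := g0 z; nra.
Qed.

Lemma Mlow_ge (D : set V) (g : V -> R) x (c : R) : D !=set0 ->
  (forall y, D y -> c <= g y + lam * sqnorm (y - x)) -> c <= Mlow D lam g x.
Proof.
move=> [y0 Dy0] H; apply: lb_le_inf; first by exists (g y0 + lam * sqnorm (y0 - x)), y0.
by move=> _ [y Dy <-]; exact: H.
Qed.

Definition wK := Mup setT lam \1_K.
Definition MK := Mlow setT lam wK.
Definition PhiK (u : V) := lam * sqnorm u - MK u.

Lemma wK_ge0 y : 0 <= wK y. Proof. exact: Mup_ge0. Qed.

Lemma PhiK_convex : convex_fun PhiK.
Proof.
move=> x1 x2 t t0 t1; rewrite /PhiK.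
set m := t *: x1 + (1 - t) *: x2.
suff : lam * sqnorm m - t * (lam * sqnorm x1) - (1 - t) * (lam * sqnorm x2)
        + t * MK x1 + (1 - t) * MK x2 <= MK m by lra.
apply: Mlow_ge; first by exists 0.
move=> y _.
have h1 : t * MK x1 <= t * (wK y + lam * sqnorm (y - x1)).
  by apply: ler_wpM2l => //; apply: Mlow_lb => //; exact: wK_ge0.
have h2 : (1 - t) * MK x2 <= (1 - t) * (wK y + lam * sqnorm (y - x2)).
  by apply: ler_wpM2l; [lra|]; apply: Mlow_lb => //; exact: wK_ge0.
suff E : lam * sqnorm m - t * (lam * sqnorm x1) - (1 - t) * (lam * sqnorm x2)
   + t * (wK y + lam * sqnorm (y - x1)) + (1 - t) * (wK y + lam * sqnorm (y - x2))
   = wK y + lam * sqnorm (y - m) by lra.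
rewrite !sqnormB /m dotDr !dotZr; ring.
Qed.

Lemma PhiK_le y : PhiK y <= lam * sqnorm y - \1_K y.
Proof.
rewrite /PhiK lerD2l lerN2; apply: Mlow_ge; first by exists 0.
move=> z _; have := Mup_ub z (I : setT y).
rewrite sqnormBC /wK; lra.
Qed.

Lemma PhiK_max (phi : V -> R) x : convex_fun phi ->
  (forall y, phi y <= lam * sqnorm y - \1_K y) -> phi x <= PhiK x.
Proof.
move=> cvx phile.
have [q Hq] := @subgrad R n phi x cvx.
pose y := (2 * lam)^-1 *: q.
have h2l : 2 * lam != 0 by rewrite mulf_neq0 // gt_eqF.
have Eq : q = (2 * lam) *: y by rewrite /y scalerA mulfV ?scale1r.
suff : MK x <= lam * sqnorm x - phi x by rewrite /PhiK; lra.
have hM : MK x <= wK y + lam * sqnorm (y - x) by apply: Mlow_lb => //; exact: wK_ge0.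
apply: le_trans hM _.
suff : wK y <= lam * sqnorm x - phi x - lam * sqnorm (y - x) by lra.
apply: Mup_le; first by exists 0.
move=> z _.
have h1 := phile z.
have Ez : x + (z - x) = z by rewrite addrC subrK.
have h2 := Hq (z - x); rewrite Ez in h2.
rewrite Eq dotZl in h2.
suff E : lam * sqnorm z - phi x - 2 * lam * dot y (z - x) - lam * sqnorm (z - y)
   = lam * sqnorm x - phi x - lam * sqnorm (y - x) by lra.
rewrite !sqnormB dotBr !(dotC z y) ?(dotC x y) ?(dotC z x) ?(dotC y x); ring.
Qed.

Lemma MK_Cu x : MK x = Cu lam \1_K x.
Proof.
rewrite /Cu /conv_env.
set S := [set h x | h in _].
suff -> : sup S = PhiK x by rewrite /PhiK; ring.
apply/eqP; rewrite eq_le; apply/andP; split.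
  apply: ge_sup; first by exists (PhiK x), PhiK => //; split; [exact: PhiK_convex | exact: PhiK_le].
  by move=> _ [h [hc hle] <-]; exact: PhiK_max.
apply: ub_le_sup.
  by exists (lam * sqnorm x - \1_K x) => _ [h [hc hle] <-]; exact: hle.
by exists PhiK => //; split; [exact: PhiK_convex | exact: PhiK_le].
Qed.

End C.



Section D.
Variables (R : realType) (n : nat).
Notation V := 'rV[R]_n.
Implicit Types (u v w y z : V).

Lemma segment (Om : set V) x y : open Om -> closure Om x -> ~ closure Om y ->
  exists z, boundary Om z /\ sqnorm (z - x) <= sqnorm (y - x).
Proof.
move=> oOm clx ncly.
pose f := fun t : R => x + t *: (y - x).
have cf : continuous f.
  move=> t; apply: cvgD; first exact: cvg_cst.
  by apply: cvgZr_tmp; exact: cvg_id.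
pose T := [set t : R | (0 <= t <= 1) /\ closure Om (f t)].
have f0 : f 0 = x by rewrite /f scale0r addr0.
have T0 : T 0 by split; [rewrite lexx ler01 | rewrite f0].
have Tub : has_ubound T by exists 1 => t [/andP[_ ->]].
set ts := sup T.
have ts0 : 0 <= ts by apply: ub_le_sup.
have ts1 : ts <= 1 by apply: ge_sup; [exists 0 | move=> t [/andP[_ ->]]].
have clfts : closure Om (f ts).
  have cl : closed (f @^-1` closure Om).
    by apply: preimage_closed; [move=> t _; exact: cf | exact: closed_closure].
  have : closure T ts by apply: closure_sup => //; exists 0.
  have sT : T `<=` f @^-1` closure Om by move=> t [].
  move/(closureS sT).
  by rewrite -(closure_id _).1.
exists (f ts); split.
  split => //.
  have -> : interior Om = Om by apply/interior_id.
  move=> Omz.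
  have ts1' : ts < 1.
    rewrite lt_neqAle ts1 andbT; apply/negP => /eqP ts1e.
    apply: ncly; apply: subset_closure.
    by move: Omz; rewrite ts1e /f scale1r addrC subrK.
  have op : open (f @^-1` Om) by apply: open_comp => // t _; exact: cf.
  have : nbhs ts (f @^-1` Om) by apply: open_nbhs_nbhs; split.
  move=> /nbhs_ballP[e e0 be]; have e0' : 0 < e by [].

  pose t' := Num.min (ts + e / 2) 1.
  have tt' : ts < t' by rewrite /t' lt_min ts1' andbT ltrDl divr_gt0.
  have Tt' : T t'.
    split.
      apply/andP; split; first by apply: le_trans (ltW tt').
      by rewrite ge_min lexx orbT.
    apply: subset_closure; apply: be.
    rewrite /ball /= ltr_norml; apply/andP; split.
      have : t' <= ts + e / 2 by rewrite ge_min lexx.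
      lra.
    lra.
  have : t' <= ts by apply: ub_le_sup.
  lra.
have -> : f ts - x = ts *: (y - x) by rewrite /f addrC addKr.
rewrite sqnormZ -[X in _ <= X]mul1r; apply: ler_wpM2r; first exact: sqnorm_ge0.
by rewrite expr_le1.
Qed.

End D.



Section E.
Variables (R : realType) (n : nat).
Notation V := 'rV[R]_n.
Implicit Types (u v w y z : V).

Lemma dist_bound (K B : set V) (lam : R) z k :
  ((lam^-1)%:E < dist_sets K B * dist_sets K B)%E -> B z -> K k ->
  lam^-1 < sqnorm (k - z).
Proof.
move=> hd Bz Kk.
have d0 : (0 <= dist_sets K B)%E.
  apply: le_ereal_inf_tmp => _ [k' Kk' [z' Bz' <-]].
  by rewrite lee_fin sqrtr_ge0.
have dle : (dist_sets K B <= (enorm (k - z))%:E)%E.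
  by apply: ereal_inf_lbound; exists k => //; exists z.
move: hd d0 dle; case: (dist_sets K B) => [r| |] //= hd d0 dle.
rewrite -EFinM lte_fin in hd; rewrite lee_fin in d0 dle.
have e2 : enorm (k - z) ^+ 2 = sqnorm (k - z) by rewrite sqr_sqrtr // sqnorm_ge0.
rewrite -e2 expr2.
have : r * r <= enorm (k - z) * enorm (k - z) by apply: ler_pM.
move: hd; lra.
Qed.

Lemma Mup_restrict (D K : set V) (lam : R) y : 0 < lam -> D y -> K `<=` D ->
  Mup D lam \1_K y = Mup setT lam \1_K y.
Proof.
move=> lam0 Dy KD; apply/eqP; rewrite eq_le; apply/andP; split.
  apply: Mup_le => //; first by exists y.
  by move=> z _; apply: Mup_ub.
apply: Mup_le => //; first by exists y.
move=> z _.
have [Kz|nKz] := pselect (K z).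
  by apply: Mup_ub => //; apply: KD.
rewrite indic0 //.
apply: le_trans (Mup_ge0 K lam0 Dy).
have := sqnorm_ge0 (z - y); nra.
Qed.

End E.

Unset Implicit Arguments. Set Strict Implicit.

Theorem theorem3p7 (R : realType) (n : nat) (Omega K : set 'rV[R]_n) (lam : R) :
  open Omega -> compact K -> K !=set0 -> K `<=` Omega -> 0 < lam ->
  ((lam^-1)%:E < dist_sets K (boundary Omega) * dist_sets K (boundary Omega))%E ->
  forall x, closure Omega x ->
    [/\ Mup (closure Omega) lam \1_K x = Mup setT lam \1_K x,
        Mlow (closure Omega) lam (Mup (closure Omega) lam \1_K) x
          = Mlow setT lam (Mup setT lam \1_K) x
      & Mlow (closure Omega) lam (Mup (closure Omega) lam \1_K) x
          = Cu lam \1_K x].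
Proof.
move=> oOm _ _ KOm lam0 hd x clx.
have KclOm : K `<=` closure Omega by move=> k /KOm; exact: subset_closure.
have E1 : forall y, closure Omega y ->
    Mup (closure Omega) lam \1_K y = Mup setT lam \1_K y.
  by move=> y cly; apply: Mup_restrict.
have E2 : Mlow (closure Omega) lam (Mup (closure Omega) lam \1_K) x
        = Mlow (closure Omega) lam (Mup setT lam \1_K) x.
  rewrite /Mlow; congr (inf _); apply/seteqP; split => _ [y cly <-]; exists y => //;
    by rewrite E1.
have E3 : Mlow (closure Omega) lam (Mup setT lam \1_K) x
        = Mlow setT lam (Mup setT lam \1_K) x.
  have w0 : forall z, 0 <= Mup setT lam \1_K z by move=> z; exact: Mup_ge0.
  apply/eqP; rewrite eq_le; apply/andP; split; last first.
    apply: Mlow_ge => //; first by exists x.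
    by move=> y _; apply: Mlow_lb.
  apply: Mlow_ge => //; first by exists x.
  move=> y _.
  have [cly|ncly] := pselect (closure Omega y).
    exact: Mlow_lb.
  have [z [bz hz]] := segment oOm clx ncly.
  have wz : Mup setT lam \1_K z <= 0.
    apply: Mup_le => //; first by exists z.
    move=> k _.
    have [Kk|nKk] := pselect (K k).
      rewrite indic1 //.
      have := dist_bound hd bz Kk.
      move=> h.
      have : lam * lam^-1 < lam * sqnorm (k - z) by rewrite ltr_pM2l.
      rewrite mulfV ?lt0r_neq0 // => h'; lra.
    rewrite indic0 //; have := sqnorm_ge0 (k - z); nra.
  have cz : closure Omega z by case: bz.
  have hM : Mlow (closure Omega) lam (Mup setT lam \1_K) x
      <= Mup setT lam \1_K z + lam * sqnorm (z - x) by apply: Mlow_lb.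
  apply: le_trans hM _.
  have := w0 y; nra.
split.
- exact: E1.
- by rewrite E2 E3.
- by rewrite E2 E3; exact: MK_Cu.
Qed.
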